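(* Let $Y$ be a first-countable topological space such that $\mathrm{H}_1([0,1],Y)\subseteq \mathrm{B}_1([0,1],Y)$. Then $Y$ is locally almost arcwise connected.
   Context: $\mathrm{H}_1(X,Y)$: mappings $f:X\to Y$ with $f^{-1}(V)$ an $F_\sigma$-set for every open $V\subseteq Y$. $\mathrm{B}_1(X,Y)$: pointwise limits of sequences of continuous mappings $X\to Y$. Two sets $A,B$ are joined by an arc in a set $S$ if there is a continuous $\gamma:[0,1]\to Y$ with $\gamma([0,1])\subseteq S$, $\gamma(0)\in A$, $\gamma(1)\in B$. $Y$ is locally almost arcwise connected at $y$ if for every neighborhood $V$ of $y$ there is a neighborhood $U\subseteq V$ of $y$ such that each pair of nonempty open subsets of $U$ can be joined by an arc in $\overline V$; $Y$ is locally almost arcwise connected if this holds at every point. *)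

(* Defs.v *)
From Stdlib Require Import Reals.
Open Scope R_scope.

Record topology (Y : Type) := mkTopology {
  t_open : (Y -> Prop) -> Prop;
  t_open_full : t_open (fun _ => True);
  t_open_inter : forall A B, t_open A -> t_open B -> t_open (fun y => A y /\ B y);
  t_open_union : forall F : (Y -> Prop) -> Prop,
      (forall A, F A -> t_open A) -> t_open (fun y => exists A, F A /\ A y)
}.
Arguments t_open {Y} _ _.

Definition nbhd {Y} (T : topology Y) (y : Y) (N : Y -> Prop) : Prop :=
  exists U, t_open T U /\ U y /\ forall z, U z -> N z.

Definition closure {Y} (T : topology Y) (S : Y -> Prop) (y : Y) : Prop :=
  forall W, t_open T W -> W y -> exists z, W z /\ S z.

Definition first_countable {Y} (T : topology Y) : Prop :=
  forall y, exists B : nat -> (Y -> Prop),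
    (forall n, nbhd T y (B n)) /\
    (forall N, nbhd T y N -> exists n, forall z, B n z -> N z).

Definition converges {Y} (T : topology Y) (u : nat -> Y) (y : Y) : Prop :=
  forall V, t_open T V -> V y -> exists N, forall n, (N <= n)%nat -> V (u n).

Definition I01 : Type := { x : R | 0 <= x <= 1 }.

Definition i0 : I01 := exist _ 0 (conj (Rle_refl 0) Rle_0_1).
Definition i1 : I01 := exist _ 1 (conj Rle_0_1 (Rle_refl 1)).

Definition open_I01 (A : I01 -> Prop) : Prop :=
  forall t, A t -> exists eps, 0 < eps /\
    forall s : I01, Rabs (proj1_sig s - proj1_sig t) < eps -> A s.

Definition closed_I01 (A : I01 -> Prop) : Prop := open_I01 (fun t => ~ A t).

Definition Fsigma_I01 (A : I01 -> Prop) : Prop :=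
  exists C : nat -> (I01 -> Prop),
    (forall n, closed_I01 (C n)) /\ (forall t, A t <-> exists n, C n t).

Definition continuous_I01 {Y} (T : topology Y) (f : I01 -> Y) : Prop :=
  forall V, t_open T V -> open_I01 (fun t => V (f t)).

Definition Baire_H1 {Y} (T : topology Y) (f : I01 -> Y) : Prop :=
  forall V, t_open T V -> Fsigma_I01 (fun t => V (f t)).

Definition Baire_B1 {Y} (T : topology Y) (f : I01 -> Y) : Prop :=
  exists g : nat -> I01 -> Y,
    (forall n, continuous_I01 T (g n)) /\
    (forall t, converges T (fun n => g n t) (f t)).

Definition joined_by_arc {Y} (T : topology Y) (A B S : Y -> Prop) : Prop :=
  exists g : I01 -> Y, continuous_I01 T g /\ (forall t, S (g t)) /\
    A (g i0) /\ B (g i1).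

Definition loc_almost_arcwise_connected_at {Y} (T : topology Y) (y : Y) : Prop :=
  forall V, nbhd T y V ->
    exists U, nbhd T y U /\ (forall z, U z -> V z) /\
      forall A B : Y -> Prop,
        t_open T A -> t_open T B ->
        (exists a, A a) -> (exists b, B b) ->
        (forall z, A z -> U z) -> (forall z, B z -> U z) ->
        joined_by_arc T A B (closure T V).

Definition loc_almost_arcwise_connected {Y} (T : topology Y) : Prop :=
  forall y, loc_almost_arcwise_connected_at T y.

(* Main.v *)
Require Import Defs.
From Stdlib Require Import Reals Lra Lia Classical ClassicalEpsilon Cantor ZArith.
Open Scope R_scope.

Lemma odd_pow_inj : forall x z u v : nat,
  ((2*u+1)*2^x = (2*v+1)*2^z)%nat -> u = v /\ x = z.
Proof.
  induction x; intros z u v H; destruct z; simpl in H.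
  - lia.
  - exfalso. replace ((2 * v + 1) * (2 * 2 ^ z))%nat with (2 * ((2*v+1)*2^z))%nat in H by ring.
    generalize dependent ((2*v+1)*2^z)%nat. intros. lia.
  - exfalso. replace ((2 * u + 1) * (2 * 2 ^ x))%nat with (2 * ((2*u+1)*2^x))%nat in H by ring.
    generalize dependent ((2*u+1)*2^x)%nat. intros. lia.
  - replace ((2 * u + 1) * (2 * 2 ^ x))%nat with (2 * ((2*u+1)*2^x))%nat in H by ring.
    replace ((2 * v + 1) * (2 * 2 ^ z))%nat with (2 * ((2*v+1)*2^z))%nat in H by ring.
    destruct (IHx z u v ltac:(lia)). subst; auto.
Qed.

Lemma pow2_INR : forall k, 2 ^ k = INR (2 ^ k)%nat.
Proof. intro k. rewrite pow_INR. reflexivity. Qed.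

Lemma frac_inj : forall a b x z : nat,
  INR a / 2^x = INR b / 2^z -> (a * 2^z = b * 2^x)%nat.
Proof.
  intros a b x z H. apply INR_eq. rewrite !mult_INR, <- !pow2_INR.
  assert (0 < 2^x) by (apply pow_lt; lra).
  assert (0 < 2^z) by (apply pow_lt; lra).
  apply (Rmult_eq_reg_r (/ (2^x * 2^z))).
  2: { apply Rgt_not_eq, Rlt_gt. apply Rinv_0_lt_compat. nra. }
  replace (INR a * 2 ^ z * / (2 ^ x * 2 ^ z)) with (INR a / 2^x) by (field; lra).
  rewrite H. field; lra.
Qed.

Definition pp (m i : nat) : R := INR (4*i+1) / 2^(m+2).
Definition qq (m i : nat) : R := INR (4*i+3) / 2^(m+2).
Definition pn (n : nat) : R := pp (fst (of_nat n)) (snd (of_nat n)).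
Definition qn (n : nat) : R := qq (fst (of_nat n)) (snd (of_nat n)).

Lemma of_nat_inj : forall n n', of_nat n = of_nat n' -> n = n'.
Proof. intros n n' H. rewrite <- (cancel_to_of n), <- (cancel_to_of n'), H. reflexivity. Qed.

Lemma pn_inj : forall n n', pn n = pn n' -> n = n'.
Proof.
  intros n n' H. unfold pn, pp in H. apply frac_inj in H.
  destruct (of_nat n) as [m i] eqn:E1; destruct (of_nat n') as [m' i'] eqn:E2; cbn [fst snd] in H.
  replace (4*i+1)%nat with (2*(2*i)+1)%nat in H by lia.
  replace (4*i'+1)%nat with (2*(2*i')+1)%nat in H by lia.
  apply odd_pow_inj in H. destruct H as [H1 H2].
  apply of_nat_inj. rewrite E1, E2. f_equal; lia.
Qed.

Lemma qn_inj : forall n n', qn n = qn n' -> n = n'.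
Proof.
  intros n n' H. unfold qn, qq in H. apply frac_inj in H.
  destruct (of_nat n) as [m i] eqn:E1; destruct (of_nat n') as [m' i'] eqn:E2; cbn [fst snd] in H.
  replace (4*i+3)%nat with (2*(2*i+1)+1)%nat in H by lia.
  replace (4*i'+3)%nat with (2*(2*i'+1)+1)%nat in H by lia.
  apply odd_pow_inj in H. destruct H as [H1 H2].
  apply of_nat_inj. rewrite E1, E2. f_equal; lia.
Qed.

Lemma pn_qn : forall n n', pn n <> qn n'.
Proof.
  intros n n' H. unfold pn, qn, pp, qq in H. apply frac_inj in H.
  destruct (of_nat n) as [m i]; destruct (of_nat n') as [m' i']; cbn [fst snd] in H.
  replace (4*i+1)%nat with (2*(2*i)+1)%nat in H by lia.
  replace (4*i'+3)%nat with (2*(2*i'+1)+1)%nat in H by lia.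
  apply odd_pow_inj in H. lia.
Qed.

Lemma pn_pos : forall n, 0 <= pn n.
Proof.
  intro n. unfold pn, pp. apply Rmult_le_pos. apply pos_INR.
  left. apply Rinv_0_lt_compat, pow_lt; lra.
Qed.

Lemma pn_lt_qn : forall n, pn n < qn n.
Proof.
  intro n. unfold pn, qn, pp, qq. apply Rmult_lt_compat_r.
  apply Rinv_0_lt_compat, pow_lt; lra.
  apply lt_INR. lia.
Qed.

Lemma INR_le_pow2 : forall n, INR n <= 2^n.
Proof.
  induction n. simpl; lra. rewrite S_INR. simpl.
  assert (1 <= 2^n) by (apply pow_R1_Rle; lra). lra.
Qed.

Lemma density : forall l r, 0 <= l -> l < r -> exists n, l <= pn n /\ qn n <= r.
Proof.
  intros l r Hl Hlr.
  destruct (archimed_cor1 ((r-l)/2) ltac:(lra)) as [M [HM HM0]].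
  assert (HP : 0 < 2^M) by (apply pow_lt; lra).
  assert (HPi : / 2^M <= / INR M).
  { apply Rinv_le_contravar. apply lt_0_INR; lia. apply INR_le_pow2. }
  destruct (archimed (l * 2^M)) as [Hu1 Hu2].
  set (u := up (l * 2^M)) in *.
  assert (Hu0 : (0 < u)%Z). { apply lt_IZR. simpl. nra. }
  set (i := Z.to_nat u).
  assert (Hi : INR i = IZR u). { unfold i. rewrite INR_IZR_INZ, Z2Nat.id; auto; lia. }
  exists (to_nat (M, i)). unfold pn, qn. rewrite cancel_of_to. simpl. unfold pp, qq.
  rewrite pow_add. simpl (2^2).
  rewrite !plus_INR, !mult_INR. simpl (INR 4); simpl (INR 1); simpl (INR 3).
  replace (1+1+1+1) with 4 by ring. replace (1+1+1) with 3 by ring. rewrite Hi.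
  assert (Hinv: / 2^M < (r-l)/2) by lra.
  assert (E1: (4*IZR u+1)/(2 ^ M * (2 * (2 * 1))) = (IZR u + /4) * / 2^M) by (field; lra).
  assert (E2: (4*IZR u+3)/(2 ^ M * (2 * (2 * 1))) = (IZR u + 3/4) * / 2^M) by (field; lra).
  assert (Hpi : 0 < / 2^M) by (apply Rinv_0_lt_compat; lra).
  assert (HlE : l = (l*2^M) * / 2^M) by (field; lra).
  assert (Hr : IZR u * / 2^M <= l + / 2^M) by (rewrite HlE at 1; nra).
  rewrite E1, E2. split.
  - rewrite HlE at 1. nra.
  - nra.
Qed.


Notation xx t := (proj1_sig t).

Lemma my_choice {A B : Type} (R0 : A -> B -> Prop) :
  (forall x, exists y, R0 x y) -> exists f, forall x, R0 x (f x).
Proof.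
  intro H. exists (fun x => proj1_sig (constructive_indefinite_description _ (H x))).
  intro x. exact (proj2_sig (constructive_indefinite_description _ (H x))).
Qed.

Lemma I01_eq : forall s t : I01, xx s = xx t -> s = t.
Proof.
  intros [s Hs] [t Ht]; simpl; intros ->. f_equal. apply proof_irrelevance.
Qed.

Lemma closed_2pts : forall (A : I01 -> Prop) r1 r2,
  (forall t, A t -> xx t = r1 \/ xx t = r2) -> closed_I01 A.
Proof.
  intros A r1 r2 H t Ht.
  set (d1 := Rabs (xx t - r1)). set (d2 := Rabs (xx t - r2)).
  assert (Hd1 : 0 <= d1) by apply Rabs_pos. assert (Hd2 : 0 <= d2) by apply Rabs_pos.
  exists (Rmin (if Req_EM_T d1 0 then 1 else d1) (if Req_EM_T d2 0 then 1 else d2)).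
  split.
  - apply Rmin_glb_lt; destruct Req_EM_T; lra.
  - intros s Hs HA. destruct (H s HA) as [E|E].
    + destruct (Req_EM_T d1 0) as [Z|Z].
      * assert (xx t = r1). { destruct (Req_dec (xx t) r1); auto. exfalso. assert (0 < Rabs (xx t - r1)) by (apply Rabs_pos_lt; lra). unfold d1 in Z; lra. }
        assert (s = t) by (apply I01_eq; congruence). subst; contradiction.
      * assert (Hm := Rmin_l d1 (if Req_EM_T d2 0 then 1 else d2)).
        rewrite E in Hs. unfold d1 in *. rewrite Rabs_minus_sym in Hs. lra.
    + destruct (Req_EM_T d2 0) as [Z|Z].
      * assert (xx t = r2). { destruct (Req_dec (xx t) r2); auto. exfalso. assert (0 < Rabs (xx t - r2)) by (apply Rabs_pos_lt; lra). unfold d2 in Z; lra. }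
        assert (s = t) by (apply I01_eq; congruence). subst; contradiction.
      * assert (Hm := Rmin_r (if Req_EM_T d1 0 then 1 else d1) d2).
        rewrite E in Hs. unfold d2 in *. rewrite Rabs_minus_sym in Hs. lra.
Qed.

Lemma closed_union2 : forall A B : I01 -> Prop, closed_I01 A -> closed_I01 B ->
  closed_I01 (fun t => A t \/ B t).
Proof.
  intros A B HA HB t Ht.
  destruct (HA t (fun h => Ht (or_introl h))) as [e1 [He1 H1]].
  destruct (HB t (fun h => Ht (or_intror h))) as [e2 [He2 H2]].
  exists (Rmin e1 e2). split. apply Rmin_glb_lt; lra.
  intros s Hs [h|h].
  - apply (H1 s). assert (Hm := Rmin_l e1 e2). lra. exact h.
  - apply (H2 s). assert (Hm := Rmin_r e1 e2). lra. exact h.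
Qed.

Definition far (N : nat) (r : R) (t : I01) : Prop :=
  forall n, (n < N)%nat -> r <= Rabs (xx t - pn n) /\ r <= Rabs (xx t - qn n).

Lemma closed_far : forall N r, closed_I01 (far N r).
Proof.
  intros N r t Ht. unfold far in Ht.
  apply not_all_ex_not in Ht. destruct Ht as [n Hn].
  apply imply_to_and in Hn. destruct Hn as [HnN Hn].
  apply not_and_or in Hn.
  destruct Hn as [Hn|Hn]; apply Rnot_le_lt in Hn.
  - exists (r - Rabs (xx t - pn n)). split. lra.
    intros s Hs Hf. destruct (Hf n HnN) as [Hf1 _].
    assert (Ht := Rabs_triang (xx s - xx t) (xx t - pn n)).
    replace (xx s - xx t + (xx t - pn n)) with (xx s - pn n) in Ht by ring. lra.
  - exists (r - Rabs (xx t - qn n)). split. lra.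
    intros s Hs Hf. destruct (Hf n HnN) as [_ Hf1].
    assert (Ht := Rabs_triang (xx s - xx t) (xx t - qn n)).
    replace (xx s - xx t + (xx t - qn n)) with (xx s - qn n) in Ht by ring. lra.
Qed.

Lemma far_exists : forall N (t : I01),
  (forall n, (n < N)%nat -> xx t <> pn n /\ xx t <> qn n) -> exists k, far N (/ INR (S k)) t.
Proof.
  intros N t H.
  assert (D : exists d, 0 < d /\ forall n, (n < N)%nat -> d <= Rabs (xx t - pn n) /\ d <= Rabs (xx t - qn n)).
  { induction N.
    - exists 1. split. lra. intros; lia.
    - destruct IHN as [d [Hd Hd2]]. { intros n Hn. apply H. lia. }
      destruct (H N ltac:(lia)) as [H1 H2].
      assert (P1 : 0 < Rabs (xx t - pn N)) by (apply Rabs_pos_lt; lra).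
      assert (P2 : 0 < Rabs (xx t - qn N)) by (apply Rabs_pos_lt; lra).
      exists (Rmin d (Rmin (Rabs (xx t - pn N)) (Rabs (xx t - qn N)))). split.
      + repeat apply Rmin_glb_lt; lra.
      + intros n Hn.
        assert (M1 := Rmin_l d (Rmin (Rabs (xx t - pn N)) (Rabs (xx t - qn N)))).
        assert (M2 := Rmin_r d (Rmin (Rabs (xx t - pn N)) (Rabs (xx t - qn N)))).
        assert (M3 := Rmin_l (Rabs (xx t - pn N)) (Rabs (xx t - qn N))).
        assert (M4 := Rmin_r (Rabs (xx t - pn N)) (Rabs (xx t - qn N))).
        destruct (Nat.eq_dec n N) as [->|Hne]. split; lra.
        destruct (Hd2 n ltac:(lia)). split; lra. }
  destruct D as [d [Hd Hd2]].
  destruct (archimed_cor1 d Hd) as [K [HK HK0]].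
  exists (pred K). replace (S (pred K)) with K by lia.
  intros n Hn. destruct (Hd2 n Hn). split; lra.
Qed.


Lemma baire_pairs (E : nat -> I01 -> Prop) :
  (forall k t, ~ E k t -> exists eps, 0 < eps /\ forall s, Rabs (xx s - xx t) < eps -> ~ E k s) ->
  (forall t, exists k, E k t) ->
  exists k n, qn n <= 1 /\ forall t, pn n <= xx t <= qn n -> E k t.
Proof.
  intros Hop Hcov. apply NNPP; intro H.
  assert (Step : forall k l r, 0 <= l < r /\ r <= 1 -> exists l' r', l <= l' /\ l' < r' /\ r' <= r /\
     forall s, l' <= xx s <= r' -> ~ E k s).
  { intros k l r [[Hl Hlr] Hr].
    destruct (density l r Hl Hlr) as [n [Hn1 Hn2]].
    assert (Hpq := pn_lt_qn n).
    assert (Ht : exists t, pn n <= xx t <= qn n /\ ~ E k t).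
    { apply NNPP; intro Hc. apply H. exists k, n. split. lra.
      intros t Ht. apply NNPP; intro He. apply Hc. exists t. auto. }
    destruct Ht as [t [Ht HEt]].
    destruct (Hop k t HEt) as [eps [He Heps]].
    exists (Rmax (pn n) (xx t - eps/2)), (Rmin (qn n) (xx t + eps/2)).
    assert (A1 := Rmax_l (pn n) (xx t - eps/2)).
    assert (A2 := Rmax_r (pn n) (xx t - eps/2)).
    assert (A3 := Rmin_l (qn n) (xx t + eps/2)).
    assert (A4 := Rmin_r (qn n) (xx t + eps/2)).
    split. lra. split.
    { apply Rmax_lub_lt; apply Rmin_glb_lt; lra. }
    split. lra.
    intros s Hs. apply Heps. apply Rabs_def1; lra. }
  assert (F : exists F : nat * (R * R) -> R * R, forall klr,
     (0 <= fst (snd klr) < snd (snd klr) /\ snd (snd klr) <= 1) ->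
     fst (snd klr) <= fst (F klr) /\ fst (F klr) < snd (F klr) /\ snd (F klr) <= snd (snd klr) /\
     forall s, fst (F klr) <= xx s <= snd (F klr) -> ~ E (fst klr) s).
  { apply (my_choice (fun klr lr' => (0 <= fst (snd klr) < snd (snd klr) /\ snd (snd klr) <= 1) ->
     fst (snd klr) <= fst lr' /\ fst lr' < snd lr' /\ snd lr' <= snd (snd klr) /\
     forall s, fst lr' <= xx s <= snd lr' -> ~ E (fst klr) s)).
    intros [k [l r]]. simpl.
    destruct (classic (0 <= l < r /\ r <= 1)) as [Hc|Hc].
    - destruct (Step k l r Hc) as [l' [r' Hlr']]. exists (l', r'). simpl. auto.
    - exists (0,0). intro; contradiction. }
  destruct F as [F HF].
  set (sq := fun k => nat_rect (fun _ => (R*R)%type) (0,1) (fun k lr => F (k, lr)) k).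
  assert (sqS : forall k, sq (S k) = F (k, sq k)) by reflexivity.
  assert (Inv : forall k, 0 <= fst (sq k) < snd (sq k) /\ snd (sq k) <= 1).
  { induction k. simpl. lra. rewrite sqS.
    destruct (HF (k, sq k) IHk) as [B1 [B2 [B3 _]]]. simpl in *. lra. }
  assert (Mon : forall k m, (k <= m)%nat -> fst (sq k) <= fst (sq m) /\ snd (sq m) <= snd (sq k)).
  { intros k m Hkm. induction Hkm. lra. rewrite sqS.
    destruct (HF (m, sq m) (Inv m)) as [B1 [B2 [B3 _]]]. simpl in *. lra. }
  assert (Bd : forall k m, fst (sq m) <= snd (sq k)).
  { intros k m. destruct (Nat.le_ge_cases k m) as [H1|H1].
    - destruct (Mon k m H1). destruct (Inv m). lra.
    - destruct (Mon m k H1). destruct (Inv k). lra. }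
  destruct (completeness (fun v => exists m, v = fst (sq m))) as [L [HL1 HL2]].
  { exists 1. intros v [m ->]. destruct (Inv m). assert (Hb := Bd m m). lra. }
  { exists (fst (sq 0%nat)). exists 0%nat. reflexivity. }
  assert (HLk : forall k, fst (sq k) <= L <= snd (sq k)).
  { intro k. split. apply HL1. exists k; reflexivity.
    apply HL2. intros v [m ->]. apply Bd. }
  assert (HL01 : 0 <= L <= 1).
  { destruct (HLk 0%nat). destruct (Inv 0%nat). lra. }
  set (tL := exist (fun v => 0 <= v <= 1) L HL01 : I01).
  destruct (Hcov tL) as [k Hk].
  destruct (HF (k, sq k) (Inv k)) as [_ [_ [_ B4]]].
  apply (B4 tL). simpl. rewrite <- sqS. apply HLk. exact Hk.
Qed.


Fixpoint Ufun {Y} (Os : Y -> Prop) (Bo : nat -> Y -> Prop) (n : nat) : Y -> Prop :=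
  match n with
  | 0%nat => fun z => Os z /\ Bo 0%nat z
  | S n => fun z => Ufun Os Bo n z /\ Bo (S n) z
  end.

Lemma Ufun_props {Y} (T : topology Y) O Bo y :
  t_open T O -> O y -> (forall k, t_open T (Bo k)) -> (forall k, Bo k y) ->
  forall n, t_open T (Ufun O Bo n) /\ Ufun O Bo n y /\ (forall z, Ufun O Bo n z -> O z) /\
    (forall k z, (k <= n)%nat -> Ufun O Bo n z -> Bo k z).
Proof.
  intros HO Oy HB By. induction n as [|n IH]; simpl.
  - split. apply t_open_inter; auto. split. auto. split. tauto.
    intros k z Hk [_ H]. replace k with 0%nat by lia. exact H.
  - destruct IH as [I1 [I2 [I3 I4]]]. split. apply t_open_inter; auto.
    split. auto. split. intros z [H _]. auto.
    intros k z Hk [H1 H2]. destruct (Nat.eq_dec k (S n)) as [->|Hne]. auto.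
    apply (I4 k z). lia. auto.
Qed.

Definition fdef {Y} (y : Y) (af bf : nat -> Y) (t : I01) : Y :=
  match excluded_middle_informative (exists n, xx t = pn n) with
  | left H => af (proj1_sig (constructive_indefinite_description _ H))
  | right _ =>
    match excluded_middle_informative (exists n, xx t = qn n) with
    | left H => bf (proj1_sig (constructive_indefinite_description _ H))
    | right _ => y
    end
  end.

Lemma fdef_p {Y} (y : Y) af bf t n : xx t = pn n -> fdef y af bf t = af n.
Proof.
  intro E. unfold fdef. destruct excluded_middle_informative as [H|H].
  - destruct constructive_indefinite_description as [n' Hn']. simpl.
    f_equal. apply pn_inj. congruence.
  - exfalso. apply H. eauto.
Qed.

Lemma fdef_q {Y} (y : Y) af bf t n : xx t = qn n -> fdef y af bf t = bf n.
Proof.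
  intro E. unfold fdef. destruct excluded_middle_informative as [H|H].
  - exfalso. destruct H as [n' Hn']. apply (pn_qn n' n). congruence.
  - destruct excluded_middle_informative as [H'|H'].
    + destruct constructive_indefinite_description as [n' Hn']. simpl.
      f_equal. apply qn_inj. congruence.
    + exfalso. apply H'. eauto.
Qed.

Lemma fdef_cases {Y} (y : Y) af bf t :
  fdef y af bf t = y \/ exists n, (xx t = pn n /\ fdef y af bf t = af n) \/ (xx t = qn n /\ fdef y af bf t = bf n).
Proof.
  destruct (classic (exists n, xx t = pn n)) as [[n Hn]|H1].
  - right. exists n. left. split; auto. apply fdef_p; auto.
  - destruct (classic (exists n, xx t = qn n)) as [[n Hn]|H2].
    + right. exists n. right. split; auto. apply fdef_q; auto.
    + left. unfold fdef. destruct excluded_middle_informative; [contradiction|].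
      destruct excluded_middle_informative; [contradiction|]. reflexivity.
Qed.

Lemma aff_in p q s : 0 <= p -> p <= q -> q <= 1 -> 0 <= s <= 1 -> 0 <= p + s * (q - p) <= 1.
Proof. intros; nra. Qed.

Theorem mainTheorem10 (Y : Type) (T : topology Y) :
  first_countable T ->
  (forall f : I01 -> Y, Baire_H1 T f -> Baire_B1 T f) ->
  loc_almost_arcwise_connected T.
Proof.
  intros FC HB y.
  apply NNPP; intro Hnot.
  unfold loc_almost_arcwise_connected_at in Hnot.
  apply not_all_ex_not in Hnot. destruct Hnot as [V HV].
  apply imply_to_and in HV. destruct HV as [HVn HV].
  assert (Key : forall U, t_open T U -> U y -> (forall z, U z -> V z) ->
    exists X : ((Y -> Prop) * (Y -> Prop)) * (Y * Y),
      t_open T (fst (fst X)) /\ t_open T (snd (fst X)) /\ fst (fst X) (fst (snd X)) /\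
      snd (fst X) (snd (snd X)) /\ (forall z, fst (fst X) z -> U z) /\
      (forall z, snd (fst X) z -> U z) /\
      ~ joined_by_arc T (fst (fst X)) (snd (fst X)) (closure T V)).
  { intros U HU Uy UV. apply NNPP; intro H. apply HV. exists U. split.
    { exists U. auto. } split. auto.
    intros A B HA HB' [a Ha] [b Hb] HAU HBU. apply NNPP; intro Hj. apply H.
    exists ((A, B), (a, b)). simpl. tauto. }
  destruct HVn as [O [HO [Oy OV]]].
  destruct (FC y) as [Bs [HBs1 HBs2]].
  set (Bo := fun k z => exists Uo, (t_open T Uo /\ Uo y /\ (forall w, Uo w -> Bs k w)) /\ Uo z).
  assert (Bo_open : forall k, t_open T (Bo k)).
  { intro k. apply (t_open_union _ T (fun Uo => t_open T Uo /\ Uo y /\ (forall w, Uo w -> Bs k w))).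
    intros A HA; apply HA. }
  assert (Bo_y : forall k, Bo k y).
  { intro k. destruct (HBs1 k) as [Uo [H1 [H2 H3]]]. exists Uo. auto. }
  assert (Bo_sub : forall k z, Bo k z -> Bs k z).
  { intros k z [Uo [[_ [_ H3]] H4]]. auto. }
  pose proof (Ufun_props T O Bo y HO Oy Bo_open Bo_y) as UP.
  set (U := Ufun O Bo) in *.
  assert (Ushrink : forall W, t_open T W -> W y -> exists N, forall n z, (N <= n)%nat -> U n z -> W z).
  { intros W HW Wy. destruct (HBs2 W) as [N HN]. { exists W. auto. }
    exists N. intros n z Hn Hz. apply HN, Bo_sub. destruct (UP n) as [_ [_ [_ H4]]]. eauto. }
  assert (Ch : exists X : nat -> ((Y -> Prop) * (Y -> Prop)) * (Y * Y), forall n,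
      t_open T (fst (fst (X n))) /\ t_open T (snd (fst (X n))) /\ fst (fst (X n)) (fst (snd (X n))) /\
      snd (fst (X n)) (snd (snd (X n))) /\ (forall z, fst (fst (X n)) z -> U n z) /\
      (forall z, snd (fst (X n)) z -> U n z) /\
      ~ joined_by_arc T (fst (fst (X n))) (snd (fst (X n))) (closure T V)).
  { apply (my_choice (fun n X =>
      t_open T (fst (fst X)) /\ t_open T (snd (fst X)) /\ fst (fst X) (fst (snd X)) /\
      snd (fst X) (snd (snd X)) /\ (forall z, fst (fst X) z -> U n z) /\
      (forall z, snd (fst X) z -> U n z) /\
      ~ joined_by_arc T (fst (fst X)) (snd (fst X)) (closure T V))).
    intro n. destruct (UP n) as [U1 [U2 [U3 _]]]. apply Key; auto. }
  destruct Ch as [X HX].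
  set (Af := fun n => fst (fst (X n))). set (Bf := fun n => snd (fst (X n))).
  set (af := fun n => fst (snd (X n))). set (bf := fun n => snd (snd (X n))).
  assert (HX' : forall n, t_open T (Af n) /\ t_open T (Bf n) /\ Af n (af n) /\ Bf n (bf n) /\
     (forall z, Af n z -> U n z) /\ (forall z, Bf n z -> U n z) /\
     ~ joined_by_arc T (Af n) (Bf n) (closure T V)) by exact HX.
  clear HX Key HV.
  set (f := fdef y af bf).
  assert (fO : forall t, O (f t)).
  { intro t. destruct (fdef_cases y af bf t) as [E|[n [[_ E]|[_ E]]]]; unfold f; rewrite E.
    - auto.
    - destruct (HX' n) as [_ [_ [H3 [_ [H5 _]]]]]. destruct (UP n) as [_ [_ [U3 _]]]. auto.
    - destruct (HX' n) as [_ [_ [_ [H4 [_ [H6 _]]]]]]. destruct (UP n) as [_ [_ [U3 _]]]. auto. }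
  assert (H1f : Baire_H1 T f).
  { intros W HW. destruct (classic (W y)) as [Wy|Wy].
    - destruct (Ushrink W HW Wy) as [N HN].
      exists (fun k t => far N (/ INR (S k)) t \/ ((xx t = pn k \/ xx t = qn k) /\ W (f t))).
      split.
      + intro k. apply closed_union2. apply closed_far.
        apply (closed_2pts _ (pn k) (qn k)). tauto.
      + intro t. split.
        * intro Hw. destruct (classic (exists n, (n < N)%nat /\ (xx t = pn n \/ xx t = qn n))) as [[n [_ Hn]]|Hn].
          -- exists n. right. auto.
          -- destruct (far_exists N t) as [k Hk].
             { intros n Hn'. split; intro E; apply Hn; exists n; auto. }
             exists k. left. exact Hk.
        * intros [k [Hk|[_ Hk]]]; [|exact Hk].
          assert (Hpos : 0 < / INR (S k)) by (apply Rinv_0_lt_compat, lt_0_INR; lia).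
          destruct (fdef_cases y af bf t) as [E|[n [[Ep E]|[Eq E]]]]; unfold f; rewrite E.
          -- auto.
          -- destruct (Nat.lt_ge_cases n N) as [Hn|Hn].
             ++ exfalso. destruct (Hk n Hn) as [H1 _]. rewrite Ep, Rminus_diag, Rabs_R0 in H1. lra.
             ++ destruct (HX' n) as [_ [_ [H3 [_ [H5 _]]]]]. eauto.
          -- destruct (Nat.lt_ge_cases n N) as [Hn|Hn].
             ++ exfalso. destruct (Hk n Hn) as [_ H1]. rewrite Eq, Rminus_diag, Rabs_R0 in H1. lra.
             ++ destruct (HX' n) as [_ [_ [_ [H4 [_ [H6 _]]]]]]. eauto.
    - exists (fun k t => (xx t = pn k \/ xx t = qn k) /\ W (f t)). split.
      + intro k. apply (closed_2pts _ (pn k) (qn k)). tauto.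
      + intro t. split.
        * intro Hw. destruct (fdef_cases y af bf t) as [E|[n [[Ep E]|[Eq E]]]].
          -- exfalso. unfold f in Hw. rewrite E in Hw. auto.
          -- exists n. auto.
          -- exists n. auto.
        * intros [k [_ Hk]]. exact Hk. }
  destruct (HB f H1f) as [g [Hg Hconv]].
  set (E := fun k t => forall j, (k <= j)%nat -> closure T V (g j t)).
  destruct (baire_pairs E) as [k [n [Hq1 Hin]]].
  { intros k t HE. unfold E in HE. apply not_all_ex_not in HE. destruct HE as [j Hj].
    apply imply_to_and in Hj. destruct Hj as [Hkj Hj].
    unfold closure in Hj. apply not_all_ex_not in Hj. destruct Hj as [W Hj].
    apply imply_to_and in Hj. destruct Hj as [HW Hj]. apply imply_to_and in Hj. destruct Hj as [Wg Hj].
    destruct (Hg j W HW t Wg) as [eps [He Heps]]. exists eps. split. auto.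
    intros s Hs HEs. apply Hj. apply (HEs j Hkj W HW). apply Heps. auto. }
  { intro t. destruct (Hconv t O HO (fO t)) as [N HN]. exists N.
    intros j Hj W HW Wg. exists (g j t). split. auto. apply OV. apply HN. auto. }
  assert (Hpq := pn_lt_qn n). assert (Hp0 := pn_pos n).
  set (r := fun s : I01 => exist (fun v => 0 <= v <= 1) (pn n + xx s * (qn n - pn n))
             (aff_in _ _ _ Hp0 (Rlt_le _ _ Hpq) Hq1 (proj2_sig s)) : I01).
  destruct (HX' n) as [HA [HB' [_ [_ [_ [_ HNJ]]]]]].
  assert (fr0 : f (r i0) = af n).
  { apply fdef_p. simpl. ring. }
  assert (fr1 : f (r i1) = bf n).
  { apply fdef_q. simpl. ring. }
  destruct (Hconv (r i0) (Af n) HA) as [N1 HN1].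
  { rewrite fr0. apply (HX' n). }
  destruct (Hconv (r i1) (Bf n) HB') as [N2 HN2].
  { rewrite fr1. apply (HX' n). }
  set (j := Nat.max k (Nat.max N1 N2)).
  apply HNJ. exists (fun s => g j (r s)). split; [|split; [|split]].
  - intros W HW s Ws. destruct (Hg j W HW (r s) Ws) as [eps [He Heps]].
    exists eps. split. auto. intros s' Hs'. apply Heps. simpl.
    replace (pn n + xx s' * (qn n - pn n) - (pn n + xx s * (qn n - pn n)))
      with ((xx s' - xx s) * (qn n - pn n)) by ring.
    rewrite Rabs_mult, (Rabs_pos_eq (qn n - pn n)) by lra.
    assert (0 <= Rabs (xx s' - xx s)) by apply Rabs_pos. nra.
  - intro s. apply Hin. simpl. destruct (proj2_sig s). nra. unfold j. lia.
  - apply HN1. unfold j. lia.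
  - apply HN2. unfold j. lia.
Qed.
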